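(* Let $V$ be a Banach space densely and continuously embedded in a Banach space $E$, $P$ a metric space, and for each $\mu\in P$ let $\{A^{(\mu)}(t)\}_{t\geq0}$ be a family of linear operators in $E$ with $V\subset D(A^{(\mu)}(t))$, $A^{(\mu)}(t)\in\mathcal L(V,E)$ and $t\mapsto A^{(\mu)}(t)\in\mathcal L(V,E)$ continuous. For each $\mu\in P$ let $\widehat A^{(\mu)}$ be a linear operator in $E$ with $V\subset D(\widehat A^{(\mu)})$, and assume $\lim_{T\to+\infty,\ \nu\to\mu}\frac1T\int_0^T\|A^{(\nu)}(t+h)-\widehat A^{(\mu)}\|_{\mathcal L(V,E)}\,dt=0$ uniformly with respect to $h\geq0$, for every $\mu\in P$. Set $A^{(\nu,\lambda)}(r):=A^{(\nu)}(r/\lambda)$ for $\lambda>0$. Then for any $\mu\in P$ and $t\geq s\geq0$, $\lim_{\lambda\to0^+,\ \nu\to\mu}\int_s^t\|A^{(\nu,\lambda)}(r)-\widehat A^{(\mu)}\|_{\mathcal L(V,E)}\,dr=0$.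
   Context: $\|\cdot\|_{\mathcal L(V,E)}$ denotes the operator norm of the restriction to $V$ of the operator, as a map from $V$ to $E$. *)

(* Defs.v *)
From HB Require Import structures.
From mathcomp Require Import all_boot all_order all_algebra.
From mathcomp Require Import all_classical all_reals all_analysis.
Set Implicit Arguments. Unset Strict Implicit. Unset Printing Implicit Defensive.
Import Order.TTheory GRing.Theory Num.Theory.
Import numFieldNormedType.Exports.
Local Open Scope classical_set_scope.
Local Open Scope ring_scope.

(* Operator norm ||f||_{L(V,E)} of a map f : V -> E (the restriction to V of
   an operator in E), as an extended real: sup_{||x||_V <= 1} ||f x||_E.
   It is +oo when f is unbounded on V. *)
Definition opnorm (R : realType) (V E : normedModType R) (f : V -> E) : \bar R :=
  ereal_sup [set (`|f x|)%:E | x in [set x : V | `|x| <= 1]].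

Definition opdiff (R : realType) (V E : normedModType R) (f g : V -> E) : V -> E :=
  fun x => f x - g x.

Definition dense_cont_embedding (R : realType) (V E : normedModType R)
  (j : {linear V -> E}) : Prop :=
  injective j /\ continuous j /\ closure (range j) = setT.

(* Main.v *)
Require Import Defs.
From HB Require Import structures.
From mathcomp Require Import all_boot all_order all_algebra.
From mathcomp Require Import all_classical all_reals all_analysis.
From mathcomp Require Import lra.
Import Order.TTheory GRing.Theory Num.Theory.
Import numFieldNormedType.Exports.
Local Open Scope classical_set_scope.
Local Open Scope ring_scope.

Section OP.
Variables (R : realType) (V E : normedModType R).

Lemma opnorm_ub (f : V -> E) x : `|x| <= 1 -> ((`|f x|)%:E <= opnorm f)%E.
Proof. by move=> hx; apply: ereal_sup_ubound; exists x. Qed.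

Lemma opnorm_ge0 (f : V -> E) : (0 <= opnorm f)%E.
Proof. apply: le_trans (@opnorm_ub f 0 _); rewrite ?normr0 ?lee_fin ?normr_ge0 // ler01. Qed.

Lemma opnorm_tri (F G1 G2 : V -> E) :
  (forall x, `|F x| <= `|G1 x| + `|G2 x|) ->
  (opnorm F <= opnorm G1 + opnorm G2)%E.
Proof.
move=> H; apply: ge_ereal_sup => _ [x hx <-].
apply: le_trans (_ : ((`|G1 x|)%:E + (`|G2 x|)%:E <= _)%E).
  by rewrite -EFinD lee_fin.
by apply: leeD; apply: opnorm_ub.
Qed.

Lemma opdiffC (f g : V -> E) : opnorm (opdiff f g) = opnorm (opdiff g f).
Proof.
apply/le_anti/andP; split; apply: ge_ereal_sup => _ [x hx <-];
  rewrite /opdiff -normrN opprB; exact: (opnorm_ub (opdiff _ _)).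
Qed.
End OP.
Lemma cont_ed {R : realType} (phi : R -> R) :
  (forall x e, 0 < e -> exists2 d, 0 < d & forall y, `|y - x| < d -> `|phi y - phi x| < e) ->
  continuous phi.
Proof.
move=> H x; apply/cvgrPdist_lt => e e0.
have [d d0 Hd] := H x e e0.
near=> y; rewrite distrC; apply: Hd; rewrite distrC.
near: y; exists d => //= z; rewrite /ball /= distrC.
Unshelve. all: end_near.
Qed.

Lemma max_lip {R : realType} (x y : R) : `|Num.max y 0 - Num.max x 0| <= `|y - x|.
Proof.
rewrite !maxEle; case: (leP y 0) => hy; case: (leP x 0) => hx.
- by rewrite subrr normr0.
- rewrite sub0r normrN gtr0_norm // ler0_norm; lra.
- rewrite subr0 gtr0_norm // ger0_norm; lra.
- by [].
Qed.

Lemma clampE {R : realType} (u : R) : 0 <= u -> Num.max u 0 = u.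
Proof. by rewrite maxEle => u0; case: (leP u 0) => // h; apply/eqP; rewrite eq_le u0 h. Qed.

Lemma clamp_ge0 {R : realType} (u : R) : 0 <= Num.max u 0.
Proof. by rewrite maxEle; case: (leP u 0) => [_|/ltW]. Qed.

Theorem lemma3p4 (R : realType) (V E : completeNormedModType R)
  (j : {linear V -> E}) (P : metricType R)
  (A : P -> R -> {linear V -> E}) (Ahat : P -> {linear V -> E}) :
  dense_cont_embedding j ->
  (* A^(mu)(t) in L(V,E) *)
  (forall mu t, 0 <= t -> (opnorm (A mu t : V -> E) < +oo)%E) ->
  (* t |-> A^(mu)(t) in L(V,E) is continuous on [0, +oo) *)
  (forall mu t, 0 <= t -> forall eps : R, 0 < eps -> exists2 delta : R, 0 < delta &
     forall t', 0 <= t' -> `|t' - t| < delta ->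
       (opnorm (opdiff (A mu t') (A mu t)) < eps%:E)%E) ->
  (* averaged convergence, uniformly in h >= 0, as T -> +oo and nu -> mu *)
  (forall mu : P, forall eps : R, 0 < eps ->
     exists T0 : R, exists2 U : set P, nbhs mu U &
       forall T, T0 < T -> forall nu, U nu -> forall h : R, 0 <= h ->
         ((T^-1)%R%:E * \int[(@lebesgue_measure R)]_(t in `[0%R, T]%classic)
            opnorm (opdiff (A nu (t + h)%R) (Ahat mu)) < eps%:E)%E) ->
  forall (mu : P) (s t : R), 0 <= s -> s <= t ->
  forall eps : R, 0 < eps ->
    exists2 delta : R, 0 < delta & exists2 U : set P, nbhs mu U &
      forall lambda, (0 < lambda < delta)%R -> forall nu, U nu ->
        (\int[(@lebesgue_measure R)]_(r in `[s, t]%classic)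
           opnorm (opdiff (A nu (r / lambda)%R) (Ahat mu)) < eps%:E)%E.
Proof.
move=> _ Abdd Acont Havg mu s t s0 st eps eps0.
pose B := Ahat mu.
pose N nu u := opnorm (opdiff (A nu u : V -> E) (B : V -> E)).
have N0 nu u : (0 <= N nu u)%E by exact: opnorm_ge0.
have Bfin : (opnorm (B : V -> E) < +oo)%E.
  rewrite ltNge leye_eq; apply/negP => /eqP Binf.
  have [T0 [U Umu HU]] := Havg mu 1 ltr01.
  pose T := Num.max T0 0 + 1.
  have T0T : T0 < T.
    have : T0 <= Num.max T0 0 by rewrite le_max lexx.
    rewrite /T; lra.
  have Tpos : 0 < T by rewrite /T; have := @clamp_ge0 _ T0; lra.
  have := HU T T0T mu (nbhs_singleton Umu) 0 (lexx 0).
  have inf u : 0 <= u -> N mu u = +oo%E.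
    move=> u0; apply/eqP; rewrite -leye_eq.
    have h1 : (opnorm (B : V -> E) <= N mu u + opnorm (A mu u : V -> E))%E.
      apply: opnorm_tri => x; rewrite /opdiff.
      have e : A mu u x - (A mu u x - B x) = B x by rewrite opprB addrC subrK.
      rewrite -{1}e; apply: le_trans (ler_normB _ _) _; by rewrite addrC.
    rewrite Binf in h1; move: h1.
    have := Abdd mu u u0; have := @opnorm_ge0 _ _ _ (A mu u : V -> E).
    case: (opnorm (A mu u : V -> E)) => [a| |] //= _ _.
    by case: (N mu u) => [r| |] //=; rewrite -EFinD leye_eq.
  rewrite (eq_integral (cst +oo%E)); last first.
    move=> u; rewrite inE /= in_itv /= => /andP[u0 _]; rewrite addr0; exact: inf.
  have lmT : (@lebesgue_measure R `[0%R, T]%classic = T%:E)%E.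
    by rewrite lebesgue_measure_itv /= lte_fin Tpos /= oppr0 adde0.
  rewrite integral_cst //; rewrite -[X in (+oo * X)%E]/(@lebesgue_measure R `[0%R, T]%classic) lmT.
  by rewrite gt0_mulye ?lte_fin // gt0_muley ?lte_fin ?invr_gt0.
have Nfin nu u : 0 <= u -> N nu u \is a fin_num.
  move=> u0; rewrite ge0_fin_numE //.
  apply: le_lt_trans (lte_add_pinfty (Abdd nu u u0) Bfin).
  apply: opnorm_tri => x; rewrite /opdiff; exact: ler_normB.
have ND nu u u' : (N nu u' <= opnorm (opdiff (A nu u' : V -> E) (A nu u : V -> E)) + N nu u)%E.
  apply: opnorm_tri => x; rewrite /opdiff; exact: ler_distD.
pose g nu u := fine (N nu (Num.max u 0)).
have gE nu u : 0 <= u -> N nu u = (g nu u)%:E.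
  by move=> u0; rewrite /g clampE // fineK // Nfin.
have gcont nu : continuous (g nu).
  apply: cont_ed => x e e0.
  have [d d0 Hd] := Acont nu (Num.max x 0) (clamp_ge0 _) e e0.
  exists d => // y hy.
  have hm := max_lip x y.
  have h1 := Hd (Num.max y 0) (clamp_ge0 _) (le_lt_trans hm hy).
  have h2 := ND nu (Num.max x 0) (Num.max y 0).
  have h3 := ND nu (Num.max y 0) (Num.max x 0).
  rewrite opdiffC in h3.
  have Dfin : opnorm (opdiff (A nu (Num.max y 0) : V -> E) (A nu (Num.max x 0) : V -> E)) \is a fin_num.
    by rewrite ge0_fin_numE ?opnorm_ge0 // (lt_trans h1) ?ltry.
  move: h1 h2 h3; rewrite -(fineK Dfin) /g -(fineK (Nfin nu _ (clamp_ge0 x))) -(fineK (Nfin nu _ (clamp_ge0 y))).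
  rewrite !lte_fin -!EFinD !lee_fin => h1 h2 h3.
  rewrite ltr_norml; apply/andP; split; lra.
move: st; rewrite le_eqVlt => /predU1P[<-|st].
  exists 1 => //; exists setT; first exact: filterT.
  by move=> *; rewrite set_itv1 integral_set1.
have ts0 : 0 < t - s by rewrite subr_gt0.
have [T0 [U Umu HU]] := Havg mu (eps / (t - s)) (divr_gt0 eps0 ts0).
have T1 : 0 < `|T0| + 1 by have := normr_ge0 T0; lra.
exists ((t - s) / (`|T0| + 1)); first by rewrite divr_gt0.
exists U => // lam /andP[l0 ldel] nu Unu.
pose T := (t - s) / lam.
pose h := s / lam.
have Tpos : 0 < T by rewrite divr_gt0.
have TT0 : T0 < T.
  rewrite /T ltr_pdivlMr //.
  move: ldel; rewrite ltr_pdivlMr // => ldel.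
  have := ler_norm T0; nra.
have h0 : 0 <= h by rewrite divr_ge0 // ltW.
have Hav := HU T TT0 nu Unu h h0.
pose G r := g nu (r / lam).
pose F u := lam * u + s.
have lam0 : lam != 0 by rewrite gt_eqF.
have FT : F T = t by rewrite /F /T mulrC divfK // subrK.
have F0 : F 0 = s by rewrite /F mulr0 add0r.
have dF : F^`()%classic = cst lam.
  apply/funext => x; rewrite derive1E /F deriveD // deriveM // derive_id derive_cst.
  rewrite scaler0 !addr0 /cst (_ : 'D_1 (fun=> s) x = 0); last exact: derive_cst.
  by rewrite addr0; exact: mulr1.
have cF : continuous F.
  move=> x; apply: cvgD; [apply: cvgM; [exact: cvg_cst|exact: cvg_id]|exact: cvg_cst].
have cG : continuous G.
  move=> x.
  have c1 : {for x, continuous (fun r : R => r / lam)}.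
    by apply: cvgM; [exact: cvg_id|exact: cvg_cst].
  exact: (continuous_comp c1 (gcont nu (x / lam))).
have key := @integration_by_substitution_increasing R F G 0 T (ltW Tpos).
rewrite F0 FT dF in key.
suff : (\int[@lebesgue_measure R]_(r in `[s, t]) (G r)%:E < eps%:E)%E.
  apply: le_lt_trans; rewrite le_eqVlt; apply/orP; left; apply/eqP.
  apply: eq_integral => r; rewrite inE /= in_itv /= => /andP[sr _].
  by rewrite /G; apply: gE; rewrite divr_ge0 // ?(le_trans s0 sr) ?ltW.
rewrite key; last first.
- exact: continuous_subspaceT.
- split; first by move=> x _; rewrite /F; apply: derivableD => //; apply: derivableM.
  + exact: cvg_at_right_filter (cF 0).
  + exact: cvg_at_left_filter (cF T).
- exact: is_cvg_cst.
- exact: is_cvg_cst.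
- by move=> x _; exact: cvg_cst.
- by move=> x y _ _ xy; rewrite /F ltrD2r ltr_pM2l.
pose I := (\int[@lebesgue_measure R]_(x in `[0%R, T]) (g nu (x + h))%:E)%E.
have gh0 x : (0 <= (g nu (x + h))%:E)%E by rewrite lee_fin /g fine_ge0.
have I0 : (0 <= I)%E by apply: integral_ge0 => x _.
have eqI : (\int[@lebesgue_measure R]_(x in `[0%R, T]) (((G \o F) * cst lam) x)%:E = lam%:E * I)%E.
  rewrite /I -ge0_integralZl_EFin //; last 2 first.
  - apply/measurable_realfun.measurable_EFinP; apply: measurable_funTS.
    apply: measurable_realfun.continuous_measurable_fun.
    move=> x; have c1 : {for x, continuous (fun r : R => r + h)}.
      by apply: cvgD; [exact: cvg_id|exact: cvg_cst].
    exact: (continuous_comp c1 (gcont nu (x + h))).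
  - exact: ltW.
  apply: eq_integral => x _.
  rewrite /= /G /F -EFinM mulrC; congr (_ * g nu _)%:E.
  by rewrite mulrDl [lam * x]mulrC mulfK.
have HI : (\int[@lebesgue_measure R]_(x in `[0%R, T])
    opnorm (opdiff (A nu (x + h)%R : V -> E) (Ahat mu : V -> E)) = I)%E.
  apply: eq_integral => x; rewrite inE /= in_itv /= => /andP[x0 _].
  by apply: gE; rewrite addr_ge0.
have Hav' : ((T^-1)%:E * I < (eps / (t - s))%:E)%E by rewrite -HI.
have Ifin : I \is a fin_num.
  rewrite ge0_fin_numE // ltNge leye_eq; apply/negP => /eqP Iinf.
  by move: Hav'; rewrite Iinf gt0_muley ?lte_fin ?invr_gt0.
rewrite eqI -(fineK Ifin) -EFinM lte_fin.
move: Hav'; rewrite -(fineK Ifin) -EFinM lte_fin /T invf_div => H.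
by rewrite mulrAC ltr_pM2r ?invr_gt0 in H.
Qed.
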